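(* Let $A$ be a synaptic algebra and $p,q\in P$. Let $r_p:=p\wedge(p^{\perp}\vee q)\wedge(p^{\perp}\vee q^{\perp})$, $r_{p^{\perp}}:=p^{\perp}\wedge(p\vee q)\wedge(p\vee q^{\perp})$, $r_q:=q\wedge(p\vee q^{\perp})\wedge(p^{\perp}\vee q^{\perp})$, $r_{q^{\perp}}:=q^{\perp}\wedge(p\vee q)\wedge(p^{\perp}\vee q)$, and $r:=[p,q]:=(p\vee q)\wedge(p\vee q^{\perp})\wedge(p^{\perp}\vee q)\wedge(p^{\perp}\vee q^{\perp})$ (so $r=r_p\oplus r_{p^{\perp}}=r_q\oplus r_{q^{\perp}}$). Then: (i) $pCq$ iff $r=0$; (ii) $pr_p=r_pp=r_p$, $pr_{p^{\perp}}=r_{p^{\perp}}p=0$, and $pr=rp=p\wedge r=r_p$; (iii) $p^{\perp}r_p=r_pp^{\perp}=0$, $p^{\perp}r_{p^{\perp}}=r_{p^{\perp}}p^{\perp}=r_{p^{\perp}}$, and $p^{\perp}r=rp^{\perp}=p^{\perp}\wedge r=r_{p^{\perp}}$; (iv) $qr_q=r_qq=r_q$, $qr_{q^{\perp}}=r_{q^{\perp}}q=0$, and $qr=rq=q\wedge r=r_q$; (v) $q^{\perp}r_q=r_qq^{\perp}=0$, $q^{\perp}r_{q^{\perp}}=r_{q^{\perp}}q^{\perp}=r_{q^{\perp}}$, and $q^{\perp}r=rq^{\perp}=q^{\perp}\wedge r=r_{q^{\perp}}$; (vi) $p,p^{\perp},q,q^{\perp}$ commute with $r$; (vii) $r_p$,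 $r_{p^{\perp}}$, $r_p^{\perp}$, $r_q$, $r_{q^{\perp}}$, $r_q^{\perp}$ commute with $r$; (viii) $r_p=p\wedge r=pr=rp$, $r_{p^{\perp}}=p^{\perp}\wedge r=p^{\perp}r=rp^{\perp}$, $r_q=q\wedge r=qr=rq$, and $r_{q^{\perp}}=q^{\perp}\wedge r=q^{\perp}r=rq^{\perp}$.
   Context: Synaptic algebra (Foulis): $R$ is a real linear associative algebra with unit $1$, and $A\subseteq R$ is a real linear subspace with $1\in A$. For $a,b\in A$ write $aCb$ iff $ab=ba$; $C(a):=\{b\in A: aCb\}$; $CC(a):=\{b\in A: bCd \text{ for all } d\in C(a)\}$. $A$ is a synaptic algebra with enveloping algebra $R$ iff: (SA1) $A$ is a partially ordered archimedean real linear space with positive cone $A^+$, $1$ is an order unit, $\|\cdot\|$ the order-unit norm; (SA2) $a\in A\Rightarrow a^2\in A^+$; (SA3) $a,b\in A^+\Rightarrow aba\in A^+$; (SA4) if $a\in A$, $b\in A^+$, $aba=0$ then $ab=ba=0$; (SA5) if $a\in A^+$ there is $b\in A^+\cap CC(a)$ with $b^2=a$; (SA6) for $a\in A$ there is $p=p^2\in A$ with $ab=0\Leftrightarrow pb=0$ for all $b\in A$; (SA7) if $1\le a$ there is $b\in A$ with $ab=ba=1$; (SA8) if $a,b\in A$, $a_1\le a_2\le\cdots$ are pairwise commuting elements of $C(b)$ with $\|a-a_n\|\to0$, then $a\in C(b)$. $A$ is nondegenerate. $P:=\{p\in A:p=p^2\}$ with the order inherited from $A$ is an orthomodular lattice with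 orthocomplement $p^{\perp}:=1-p$, meet $\wedge$, join $\vee$; $\oplus$ denotes the sum of orthogonal projections. *)

(* Defs.v *)
(* scalars R : realType (the real numbers), enveloping
   algebra E : algType R (real linear associative algebra with unit). *)
From HB Require Import structures.
From mathcomp Require Import all_boot all_order all_algebra.
From mathcomp Require Import reals.
From Stdlib Require Import ClassicalEpsilon.
Set Implicit Arguments. Unset Strict Implicit. Unset Printing Implicit Defensive.
Import Order.TTheory GRing.Theory Num.Theory.
Local Open Scope ring_scope.

Section Synaptic.
Variables (R : realType) (E : algType R).
(* A : the subspace A of E (as a predicate); pos : the positive cone A^+ *)
Variables (A pos : E -> Prop).

Definition sle (a b : E) : Prop := pos (b - a).

Definition scomm (a b : E) : Prop := a * b = b * a.
Definition inCC (a b : E) : Prop :=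
  A b /\ forall d, A d -> scomm a d -> scomm b d.

(* order-unit norm: ||x|| = inf {l >= 0 | -l 1 <= x <= l 1}.
   ||x_n|| -> 0  iff  for all eps > 0, eventually -eps 1 <= x_n <= eps 1. *)
Definition oun_cvg0 (x : nat -> E) : Prop :=
  forall eps : R, 0 < eps -> exists N : nat, forall n : nat, (N <= n)%N ->
    sle (- (eps *: 1)) (x n) /\ sle (x n) (eps *: 1).

Record synaptic : Prop := {
  sa_sub0 : A 0;
  sa_subD : forall a b, A a -> A b -> A (a + b);
  sa_subZ : forall (k : R) a, A a -> A (k *: a);
  sa_one : A 1;
  sa_nondeg : (1 : E) <> 0;
  sa_pos_sub : forall a, pos a -> A a;
  sa_pos0 : pos 0;
  sa_posD : forall a b, pos a -> pos b -> pos (a + b);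
  sa_posZ : forall (k : R) a, 0 <= k -> pos a -> pos (k *: a);
  sa_pos_anti : forall a, pos a -> pos (- a) -> a = 0;
  sa_archi : forall a b, A a -> A b ->
     (forall n : nat, sle (a *+ n) b) -> sle a 0;
  sa_unit : forall a, A a -> exists k : R, sle a (k *: 1);
  sa2 : forall a, A a -> pos (a * a);
  sa3 : forall a b, pos a -> pos b -> pos (a * b * a);
  sa4 : forall a b, A a -> pos b -> a * b * a = 0 -> a * b = 0 /\ b * a = 0;
  sa5 : forall a, pos a -> exists b, pos b /\ inCC a b /\ b * b = a;
  sa6 : forall a, A a -> exists p, A p /\ p * p = p /\
          forall b, A b -> (a * b = 0 <-> p * b = 0);
  sa7 : forall a, A a -> sle 1 a -> exists b, A b /\ a * b = 1 /\ b * a = 1;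
  sa8 : forall a b (an : nat -> E), A a -> A b ->
          (forall n, A (an n)) ->
          (forall n, scomm b (an n)) ->
          (forall n m, scomm (an n) (an m)) ->
          (forall n, sle (an n) (an n.+1)) ->
          oun_cvg0 (fun n => a - an n) ->
          scomm b a
}.

Definition proj (p : E) : Prop := A p /\ p * p = p.
Definition perp (p : E) : E := 1 - p.

Definition is_meet (p q m : E) : Prop :=
  proj m /\ sle m p /\ sle m q /\
  forall x, proj x -> sle x p -> sle x q -> sle x m.
Definition is_join (p q j : E) : Prop :=
  proj j /\ sle p j /\ sle q j /\
  forall x, proj x -> sle p x -> sle q x -> sle j x.

(* meet and join in the lattice P (the glb / lub in P, which exists since
   P is a lattice; chosen by classical description) *)
Definition pmeet (p q : E) : E := epsilon (inhabits 0) (is_meet p q).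
Definition pjoin (p q : E) : E := epsilon (inhabits 0) (is_join p q).

Definition rp (p q : E) : E :=
  pmeet (pmeet p (pjoin (perp p) q)) (pjoin (perp p) (perp q)).
Definition rpp (p q : E) : E :=
  pmeet (pmeet (perp p) (pjoin p q)) (pjoin p (perp q)).
Definition rq (p q : E) : E :=
  pmeet (pmeet q (pjoin p (perp q))) (pjoin (perp p) (perp q)).
Definition rqq (p q : E) : E :=
  pmeet (pmeet (perp q) (pjoin p q)) (pjoin (perp p) q).
Definition pcomm (p q : E) : E :=
  pmeet (pmeet (pmeet (pjoin p q) (pjoin p (perp q))) (pjoin (perp p) q))
        (pjoin (perp p) (perp q)).

End Synaptic.

(* Main.v *)
Require Import Defs.
From HB Require Import structures.
From mathcomp Require Import all_boot all_order all_algebra.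
From mathcomp Require Import reals.
From Stdlib Require Import ClassicalEpsilon.
Import Order.TTheory GRing.Theory Num.Theory.
Set Implicit Arguments. Unset Strict Implicit. Unset Printing Implicit Defensive.
Local Open Scope ring_scope.

Section Dev.
Variables (R : realType) (E : algType R) (A pos : E -> Prop).
Hypothesis HA : synaptic A pos.

Local Notation proj := (proj A).
Local Notation sle := (sle pos).
Local Notation pmeet := (pmeet A pos).
Local Notation pjoin := (pjoin A pos).

Lemma A_sub a b : A a -> A b -> A (a - b).
Proof.
move=> Ha Hb; apply: (sa_subD HA) => //; rewrite -scaleN1r; exact: (sa_subZ HA).
Qed.

Lemma pos_idem e : A e -> e * e = e -> pos e.
Proof. by move=> Ha He; rewrite -He; apply: (sa2 HA). Qed.

Lemma proj_pos e : proj e -> pos e.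
Proof. by case=> ??; apply: pos_idem. Qed.

Lemma proj_perp e : proj e -> proj (perp e).
Proof.
case=> Ha He; split; first exact: A_sub (sa_one HA) Ha.
by rewrite /perp mulrBl mul1r mulrBr mulr1 He subrr subr0.
Qed.

Lemma perpK (e : E) : perp (perp e) = e.
Proof. by rewrite /perp subKr. Qed.

Lemma pos_sum0 a b : pos a -> pos b -> a + b = 0 -> a = 0.
Proof.
move=> Ha Hb H; apply: (sa_pos_anti HA) => //.
have -> : - a = b by rewrite -[b](addKr a) H addr0.
done.
Qed.

Lemma sle_refl e : sle e e.
Proof. by rewrite /Defs.sle subrr; exact: (sa_pos0 HA). Qed.

Lemma sle_trans a b c : sle a b -> sle b c -> sle a c.
Proof.
rewrite /Defs.sle => H1 H2.
have -> : c - a = (c - b) + (b - a) by rewrite addrA subrK.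
exact: (sa_posD HA).
Qed.

Lemma sle_anti a b : sle a b -> sle b a -> a = b.
Proof.
rewrite /Defs.sle => H1 H2; symmetry; apply: subr0_eq.
by apply: (sa_pos_anti HA) => //; rewrite opprB.
Qed.

Lemma sle_perp a b : sle a b -> sle (perp b) (perp a).
Proof.
rewrite /Defs.sle /perp => H.
have -> : (1 - a) - (1 - b) = b - a by rewrite opprB addrC addrA subrK.
done.
Qed.

Lemma le_proj e f : proj e -> proj f -> sle e f <-> (e * f = e /\ f * e = e).
Proof.
move=> [Ae He] [Af Hf]; split.
- rewrite /Defs.sle => Hfe.
  set g := perp f.
  have [Ag Hg] : proj g by apply: proj_perp.
  have Pg : pos g by apply: pos_idem.
  have Pe : pos e by apply: pos_idem.
  have gf : g * f = 0 by rewrite /g /perp mulrBl mul1r Hf subrr.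
  have H1 := sa3 HA Pg Hfe.
  have E1 : g * (f - e) * g = - (g * e * g).
    by rewrite [g * (f - e)]mulrBr gf sub0r mulNr.
  rewrite E1 in H1.
  have H2 : pos (g * e * g) by apply: (sa3 HA).
  have H3 : g * e * g = 0 by apply: (sa_pos_anti HA).
  have [H4 H5] := sa4 HA Ag Pe H3.
  split; symmetry; apply: subr0_eq.
  + by rewrite -[X in X - _]mulr1 -mulrBr.
  + by rewrite -[X in X - _]mul1r -mulrBl.
- move=> [H1 H2]; rewrite /Defs.sle; apply: pos_idem; first exact: A_sub.
  by rewrite mulrBl !mulrBr Hf He H1 H2 subrr subr0.
Qed.

Lemma le_of_perp0 e j : proj e -> proj j -> perp j * e = 0 -> e * perp j = 0 -> sle e j.
Proof.
move=> Pe Pj H1 H2; apply/le_proj => //; split.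
- by symmetry; apply: subr0_eq; rewrite -[X in X - _]mulr1 -mulrBr.
- by symmetry; apply: subr0_eq; rewrite -[X in X - _]mul1r -mulrBl.
Qed.

Lemma comp_zero g e f : proj g -> proj e -> proj f -> (e + f) * g = 0 ->
  g * e = 0 /\ e * g = 0.
Proof.
move=> [Ag Hg] Pe Pf H.
have Pg : pos g by apply: pos_idem.
have H1 : g * e * g + g * f * g = 0.
  by rewrite -mulrDl -mulrDr -mulrA H mulr0.
have H2 : g * e * g = 0.
  apply: (pos_sum0 _ _ H1); apply: (sa3 HA) => //; exact: proj_pos.
exact: (sa4 HA Ag (proj_pos Pe) H2).
Qed.

Lemma join_ex e f : proj e -> proj f -> exists j, is_join A pos e f j.
Proof.
move=> Pe Pf.
have Aef : A (e + f) by apply: (sa_subD HA); [case: Pe | case: Pf].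
have [j [Aj [Hj Hb]]] := sa6 HA Aef.
have Pj : proj j by [].
have Pj' := proj_perp Pj.
have H0 : (e + f) * perp j = 0.
  apply/Hb; first by case: Pj'.
  by rewrite /perp mulrBr mulr1 Hj subrr.
exists j; split => //; split; [|split].
- have [H1 H2] := comp_zero Pj' Pe Pf H0.
  exact: le_of_perp0.
- rewrite addrC in H0; have [H1 H2] := comp_zero Pj' Pf Pe H0.
  exact: le_of_perp0.
- move=> x Px Hex Hfx.
  have [e1 e2] := (le_proj Pe Px).1 Hex.
  have [f1 f2] := (le_proj Pf Px).1 Hfx.
  have Px' := proj_perp Px.
  have H1 : (e + f) * perp x = 0.
    by rewrite /perp mulrBr mulr1 mulrDl e1 f1 subrr.
  have H2 : j * perp x = 0 by apply/Hb => //; case: Px'.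
  have H3 : perp x * j * perp x = 0 by rewrite -mulrA H2 mulr0.
  have [H4 H5] := sa4 HA (proj_perp Px).1 (proj_pos Pj) H3.
  exact: le_of_perp0.
Qed.

Lemma pjoinP e f : proj e -> proj f -> is_join A pos e f (pjoin e f).
Proof. move=> Pe Pf; rewrite /Defs.pjoin; apply: epsilon_spec; exact: join_ex. Qed.

Lemma meet_ex e f : proj e -> proj f ->
  is_meet A pos e f (perp (pjoin (perp e) (perp f))).
Proof.
move=> Pe Pf.
have [Pj [H1 [H2 H3]]] := pjoinP (proj_perp Pe) (proj_perp Pf).
split; first exact: proj_perp.
split; [|split].
- by move: (sle_perp H1); rewrite perpK.
- by move: (sle_perp H2); rewrite perpK.
- move=> x Px Hx1 Hx2.
  have := sle_perp (H3 _ (proj_perp Px) (sle_perp Hx1) (sle_perp Hx2)).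
  by rewrite perpK.
Qed.

Lemma pmeetP e f : proj e -> proj f -> is_meet A pos e f (pmeet e f).
Proof. move=> Pe Pf; rewrite /Defs.pmeet; apply: epsilon_spec; eexists; exact: meet_ex. Qed.

Lemma meet_uniq e f m : proj e -> proj f -> is_meet A pos e f m -> pmeet e f = m.
Proof.
move=> Pe Pf [Pm [H1 [H2 H3]]].
have [Pm' [H1' [H2' H3']]] := pmeetP Pe Pf.
by apply: sle_anti; [apply: H3 | apply: H3'].
Qed.

Lemma join_uniq e f m : proj e -> proj f -> is_join A pos e f m -> pjoin e f = m.
Proof.
move=> Pe Pf [Pm [H1 [H2 H3]]].
have [Pm' [H1' [H2' H3']]] := pjoinP Pe Pf.
by apply: sle_anti; [apply: H3' | apply: H3].
Qed.

Lemma proj_meet e f : proj e -> proj f -> proj (pmeet e f).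
Proof. by move=> Pe Pf; case: (pmeetP Pe Pf). Qed.
Lemma proj_join e f : proj e -> proj f -> proj (pjoin e f).
Proof. by move=> Pe Pf; case: (pjoinP Pe Pf). Qed.

Hint Resolve proj_perp proj_meet proj_join sle_refl : core.

Lemma meet_le_l e f : proj e -> proj f -> sle (pmeet e f) e.
Proof. by move=> Pe Pf; case: (pmeetP Pe Pf) => _ []. Qed.
Lemma meet_le_r e f : proj e -> proj f -> sle (pmeet e f) f.
Proof. by move=> Pe Pf; case: (pmeetP Pe Pf) => _ [_ []]. Qed.
Lemma meet_glb x e f : proj x -> proj e -> proj f -> sle x e -> sle x f -> sle x (pmeet e f).
Proof. by move=> Px Pe Pf; case: (pmeetP Pe Pf) => _ [_ [_ H]]; apply: H. Qed.
Lemma join_ge_l e f : proj e -> proj f -> sle e (pjoin e f).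
Proof. by move=> Pe Pf; case: (pjoinP Pe Pf) => _ []. Qed.
Lemma join_ge_r e f : proj e -> proj f -> sle f (pjoin e f).
Proof. by move=> Pe Pf; case: (pjoinP Pe Pf) => _ [_ []]. Qed.

Lemma meet_tr_l e f x : proj e -> proj f -> sle e x -> sle (pmeet e f) x.
Proof. move=> Pe Pf; apply: sle_trans; exact: meet_le_l. Qed.
Lemma meet_tr_r e f x : proj e -> proj f -> sle f x -> sle (pmeet e f) x.
Proof. move=> Pe Pf; apply: sle_trans; exact: meet_le_r. Qed.
Lemma join_tr_l e f x : proj e -> proj f -> sle x e -> sle x (pjoin e f).
Proof. move=> Pe Pf H; apply: sle_trans H _; exact: join_ge_l. Qed.
Lemma join_tr_r e f x : proj e -> proj f -> sle x f -> sle x (pjoin e f).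
Proof. move=> Pe Pf H; apply: sle_trans H _; exact: join_ge_r. Qed.

Lemma pmeet_def e f : proj e -> proj f -> pmeet e f = perp (pjoin (perp e) (perp f)).
Proof. by move=> Pe Pf; apply: meet_uniq => //; apply: meet_ex. Qed.

Lemma perp_meet e f : proj e -> proj f -> perp (pmeet e f) = pjoin (perp e) (perp f).
Proof. by move=> Pe Pf; rewrite pmeet_def ?perpK; auto. Qed.

Lemma perp_join e f : proj e -> proj f -> perp (pjoin e f) = pmeet (perp e) (perp f).
Proof. by move=> Pe Pf; rewrite pmeet_def ?perpK; auto. Qed.

Lemma A_mul_comm e f : proj e -> proj f -> e * f = f * e -> A (e * f).
Proof.
move=> [Ae He] [Af Hf] H.
have H1 : A ((e + f) * (e + f)) by apply: (sa_pos_sub HA); apply: (sa2 HA); apply: (sa_subD HA).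
have H2 : (e + f) * (e + f) = (e + f) + (e * f) *+ 2.
  rewrite mulrDl !mulrDr He Hf -H mulr2n.
  by rewrite [e * f + f]addrC addrACA.
have H3 : A ((e * f) *+ 2).
  have -> : (e * f) *+ 2 = (e + f) * (e + f) - (e + f) by rewrite H2 addrC addKr.
  apply: A_sub => //; exact: (sa_subD HA).
have -> : e * f = (2%:R^-1 : R) *: ((e * f) *+ 2).
  by rewrite -scaler_nat scalerA mulVf ?scale1r // pnatr_eq0.
exact: (sa_subZ HA).
Qed.

Lemma meet_comm e f : proj e -> proj f -> e * f = f * e -> pmeet e f = e * f.
Proof.
move=> Pe Pf H; case: (Pe) => Ae He; case: (Pf) => Af Hf.
have Pef : proj (e * f).
  split; first exact: A_mul_comm.
  by rewrite mulrA -[e * f * e]mulrA -H mulrA He -mulrA Hf.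
apply: meet_uniq => //; split => //; split; [|split].
- apply/le_proj => //; split; first by rewrite -mulrA -H mulrA He.
  by rewrite mulrA He.
- apply/le_proj => //; split; first by rewrite -mulrA Hf.
  by rewrite H mulrA Hf.
- move=> x Px Hx1 Hx2.
  have [a1 a2] := (le_proj Px Pe).1 Hx1.
  have [b1 b2] := (le_proj Px Pf).1 Hx2.
  apply/le_proj => //; split; first by rewrite mulrA a1 b1.
  by rewrite -mulrA b2 a2.
Qed.

Lemma join_orth e f : proj e -> proj f -> e * f = 0 -> f * e = 0 -> pjoin e f = e + f.
Proof.
move=> Pe Pf H1 H2; case: (Pe) => Ae He; case: (Pf) => Af Hf.
have Pef : proj (e + f).
  split; first exact: (sa_subD HA).
  by rewrite mulrDl !mulrDr He Hf H1 H2 addr0 add0r.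
apply: join_uniq => //; split => //; split; [|split].
- apply/le_proj => //; split; first by rewrite mulrDr He H1 addr0.
  by rewrite mulrDl He H2 addr0.
- apply/le_proj => //; split; first by rewrite mulrDr Hf H2 add0r.
  by rewrite mulrDl Hf H1 add0r.
- move=> x Px Hx1 Hx2.
  have [a1 a2] := (le_proj Pe Px).1 Hx1.
  have [b1 b2] := (le_proj Pf Px).1 Hx2.
  by apply/le_proj => //; split; rewrite ?mulrDl ?mulrDr ?a1 ?a2 ?b1 ?b2.
Qed.

Lemma orth_le e f g : proj e -> proj f -> proj g -> sle e g -> sle f (perp g) ->
  e * f = 0 /\ f * e = 0.
Proof.
move=> Pe Pf Pg H1 H2.
have [a1 a2] := (le_proj Pe Pg).1 H1.
have [b1 b2] := (le_proj Pf (proj_perp Pg)).1 H2.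
have gg : g * perp g = 0 by case: Pg => _ Hg; rewrite /perp mulrBr mulr1 Hg subrr.
have gg' : perp g * g = 0 by case: Pg => _ Hg; rewrite /perp mulrBl mul1r Hg subrr.
split.
- by rewrite -a1 -b2 mulrA -(mulrA e) gg mulr0 mul0r.
- by rewrite -b1 -a2 mulrA -(mulrA f) gg' mulr0 mul0r.
Qed.

Lemma comm_le e f : proj e -> proj f -> sle e f -> e * f = f * e.
Proof. move=> Pe Pf H; have [-> ->] := (le_proj Pe Pf).1 H; done. Qed.

Lemma comm_le_perp e f : proj e -> proj f -> sle e (perp f) -> e * f = f * e.
Proof. move=> Pe Pf H; have [-> ->] := orth_le Pf Pe Pf (sle_refl f) H; done. Qed.

Lemma comm_perp (a b : E) : a * b = b * a -> perp a * b = b * perp a.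
Proof. by move=> H; rewrite /perp mulrBl mulrBr mul1r mulr1 H. Qed.


Lemma le_mul e f : proj e -> proj f -> sle e f -> e * f = e /\ f * e = e.
Proof. by move=> Pe Pf /(le_proj Pe Pf). Qed.

Lemma le_perp0 e f : proj e -> proj f -> sle f (perp e) -> e * f = 0 /\ f * e = 0.
Proof. move=> Pe Pf H; exact: (orth_le Pe Pf Pe (sle_refl e) H). Qed.

Lemma comm_facts x r : proj x -> proj r -> x * r = r * x ->
  [/\ x * (x * r) = x * r, (x * r) * x = x * r, x * (perp x * r) = 0,
      (perp x * r) * x = 0 &
  [/\ perp x * (x * r) = 0, (x * r) * perp x = 0, scomm (x * r) r, scomm (perp (x * r)) r &
      r * x = x * r]].
Proof.
move=> [Ax Hx] [Ar Hr] H.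
have xpx : x * perp x = 0 by rewrite /perp mulrBr mulr1 Hx subrr.
have pxx : perp x * x = 0 by rewrite /perp mulrBl mul1r Hx subrr.
have sc : scomm (x * r) r by rewrite /scomm -mulrA Hr mulrA -H -mulrA Hr.
split.
- by rewrite mulrA Hx.
- by rewrite -mulrA -H mulrA Hx.
- by rewrite mulrA xpx mul0r.
- by rewrite -mulrA -H mulrA pxx mul0r.
- split => //.
  + by rewrite mulrA pxx mul0r.
  + by rewrite -mulrA -(comm_perp H) mulrA xpx mul0r.
  + rewrite /scomm comm_perp //.
Qed.

Section Main.
Variables (p q : E).
Hypotheses (Hp : proj p) (Hq : proj q).

Create HintDb lat.
Hint Resolve meet_glb meet_tr_l meet_tr_r join_tr_l join_tr_r sle_refl
  proj_meet proj_join proj_perp Hp Hq : lat.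
Hint Resolve Hp Hq : core.

Ltac lat := match goal with
 | |- Defs.sle _ ?x ?x => apply: sle_refl
 | |- Defs.sle _ _ (Defs.pmeet _ _ _ _) =>
     apply: meet_glb; [auto 10 with lat | auto 10 with lat | auto 10 with lat | lat | lat]
 | |- Defs.sle _ (Defs.pmeet _ _ _ _) _ =>
     apply: meet_tr_l; [auto 10 with lat | auto 10 with lat | lat]
 | |- Defs.sle _ (Defs.pmeet _ _ _ _) _ =>
     apply: meet_tr_r; [auto 10 with lat | auto 10 with lat | lat]
 | |- Defs.sle _ _ (Defs.pjoin _ _ _ _) =>
     apply: join_tr_l; [auto 10 with lat | auto 10 with lat | lat]
 | |- Defs.sle _ _ (Defs.pjoin _ _ _ _) =>
     apply: join_tr_r; [auto 10 with lat | auto 10 with lat | lat]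
 end.

Lemma main_lemma :
  let r := pcomm A pos p q in
  let r_p := rp A pos p q in
  let r_pp := rpp A pos p q in
  let r_q := rq A pos p q in
  let r_qq := rqq A pos p q in
  let pmeet := Defs.pmeet A pos in
  (p * q = q * p <-> r = 0) /\
  (p * r_p = r_p /\ r_p * p = r_p /\ p * r_pp = 0 /\ r_pp * p = 0 /\
   p * r = r * p /\ r * p = pmeet p r /\ pmeet p r = r_p) /\
  (perp p * r_p = 0 /\ r_p * perp p = 0 /\
   perp p * r_pp = r_pp /\ r_pp * perp p = r_pp /\
   perp p * r = r * perp p /\ r * perp p = pmeet (perp p) r /\
   pmeet (perp p) r = r_pp) /\
  (q * r_q = r_q /\ r_q * q = r_q /\ q * r_qq = 0 /\ r_qq * q = 0 /\
   q * r = r * q /\ r * q = pmeet q r /\ pmeet q r = r_q) /\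
  (perp q * r_q = 0 /\ r_q * perp q = 0 /\
   perp q * r_qq = r_qq /\ r_qq * perp q = r_qq /\
   perp q * r = r * perp q /\ r * perp q = pmeet (perp q) r /\
   pmeet (perp q) r = r_qq) /\
  (scomm p r /\ scomm (perp p) r /\ scomm q r /\ scomm (perp q) r) /\
  (scomm r_p r /\ scomm r_pp r /\ scomm (perp r_p) r /\
   scomm r_q r /\ scomm r_qq r /\ scomm (perp r_q) r) /\
  (r_p = pmeet p r /\ pmeet p r = p * r /\ p * r = r * p /\
   r_pp = pmeet (perp p) r /\ pmeet (perp p) r = perp p * r /\
   perp p * r = r * perp p /\
   r_q = pmeet q r /\ pmeet q r = q * r /\ q * r = r * q /\
   r_qq = pmeet (perp q) r /\ pmeet (perp q) r = perp q * r /\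
   perp q * r = r * perp q).
Proof.
cbv zeta.
set r := pcomm A pos p q.
have Pr : proj r by rewrite /r /pcomm; auto 10 with lat.
set a1 := pmeet p q.
set a2 := pmeet p (perp q).
set a3 := pmeet (perp p) q.
set a4 := pmeet (perp p) (perp q).
have P1 : proj a1 by rewrite /a1; auto with lat.
have P2 : proj a2 by rewrite /a2; auto with lat.
have P3 : proj a3 by rewrite /a3; auto with lat.
have P4 : proj a4 by rewrite /a4; auto with lat.
have L1p : sle a1 p by apply: meet_le_l.
have L1q : sle a1 q by apply: meet_le_r; auto.
have L2p : sle a2 p by apply: meet_le_l; auto.
have L2q : sle a2 (perp q) by apply: meet_le_r; auto.
have L3p : sle a3 (perp p) by apply: meet_le_l; auto.
have L3q : sle a3 q by apply: meet_le_r; auto.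
have L4p : sle a4 (perp p) by apply: meet_le_l; auto.
have L4q : sle a4 (perp q) by apply: meet_le_r; auto.
have [o34 o43] := orth_le P3 P4 Hq L3q L4q.
have [o24 o42] := orth_le P2 P4 Hp L2p L4p.
have [o23 o32] := orth_le P2 P3 Hp L2p L3p.
have [o14 o41] := orth_le P1 P4 Hp L1p L4p.
have [o13 o31] := orth_le P1 P3 Hp L1p L3p.
have [o12 o21] := orth_le P1 P2 Hq L1q L2q.
have Hs : perp r = a4 + a3 + a2 + a1.
  have e1 : perp (pjoin p q) = a4 by apply: perp_join.
  have e2 : perp (pjoin p (perp q)) = a3.
    by rewrite perp_join ?perpK; auto.
  have e3 : perp (pjoin (perp p) q) = a2.
    by rewrite perp_join ?perpK; auto.
  have e4 : perp (pjoin (perp p) (perp q)) = a1.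
    by rewrite perp_join ?perpK; auto.
  rewrite /r /pcomm.
  rewrite perp_meet; auto 10 with lat.
  rewrite perp_meet; auto 10 with lat.
  rewrite perp_meet; auto 10 with lat.
  rewrite e1 e2 e3 e4.
  have J1 : pjoin a4 a3 = a4 + a3 by apply: join_orth.
  have P43 : proj (a4 + a3) by rewrite -J1; auto with lat.
  have J2 : pjoin (a4 + a3) a2 = a4 + a3 + a2.
    by apply: join_orth => //; rewrite ?mulrDl ?mulrDr ?o42 ?o32 ?o24 ?o23 addr0.
  have P432 : proj (a4 + a3 + a2) by rewrite -J2; auto with lat.
  rewrite J1 J2; apply: join_orth => //;
    by rewrite ?mulrDl ?mulrDr ?o41 ?o31 ?o21 ?o14 ?o13 ?o12 !addr0.
have Hr : r = perp (a4 + a3 + a2 + a1) by rewrite -Hs perpK.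
have commx : forall x, proj x ->
    (sle a1 x \/ sle a1 (perp x)) -> (sle a2 x \/ sle a2 (perp x)) ->
    (sle a3 x \/ sle a3 (perp x)) -> (sle a4 x \/ sle a4 (perp x)) ->
    x * r = r * x.
  move=> x Px c1 c2 c3 c4.
  have cc : forall a, proj a -> (sle a x \/ sle a (perp x)) -> x * a = a * x.
    move=> a Pa [H|H]; symmetry; [exact: comm_le | exact: comm_le_perp].
  rewrite Hr; symmetry; apply: comm_perp.
  by rewrite !mulrDl !mulrDr !cc.
have Hpr : p * r = r * p.
  apply: commx => //; [left|left|right|right] => //; rewrite perpK.
have Hqr : q * r = r * q.
  apply: commx => //; [left|right|left|right] => //; rewrite perpK.
have Hi : p * q = q * p <-> r = 0.
  split.
  - move=> Hpq.
    have X : p * perp q = perp q * p := esym (comm_perp (esym Hpq)).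
    have E1 : a1 = p * q := meet_comm Hp Hq Hpq.
    have E2 : a2 = p * perp q := meet_comm Hp (proj_perp Hq) X.
    have E3 : a3 = perp p * q := meet_comm (proj_perp Hp) Hq (comm_perp Hpq).
    have E4 : a4 = perp p * perp q :=
      meet_comm (proj_perp Hp) (proj_perp Hq) (comm_perp X).
    rewrite Hr E1 E2 E3 E4 -mulrDr -addrA -mulrDr /perp !subrK !mulr1 subrK.
    by rewrite subrr.
  - move=> Hr0.
    have Hs1 : a4 + a3 + a2 + a1 = 1 by rewrite -Hs Hr0 /perp subr0.
    have [p1 p1'] := le_mul P1 Hp L1p.
    have [p2 p2'] := le_mul P2 Hp L2p.
    have [p3 p3'] := le_perp0 Hp P3 L3p.
    have [p4 p4'] := le_perp0 Hp P4 L4p.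
    have [q1 q1'] := le_mul P1 Hq L1q.
    have [q3 q3'] := le_mul P3 Hq L3q.
    have [q2 q2'] := le_perp0 Hq P2 L2q.
    have [q4 q4'] := le_perp0 Hq P4 L4q.
    have Ep : p = a2 + a1.
      have := congr1 (fun z => p * z) Hs1.
      by rewrite /= !mulrDr p1' p2' p3 p4 mulr1 !add0r => <-.
    have Eq : q = a3 + a1.
      have := congr1 (fun z => q * z) Hs1.
      by rewrite /= !mulrDr q1' q2 q3' q4 mulr1 add0r addr0 => <-.
    have [a11 _] := le_mul P1 P1 (sle_refl a1).
    rewrite Ep Eq !mulrDl !mulrDr o23 o21 o13 o32 o31 o12 a11.
    by rewrite ?add0r ?addr0.
have Pp' : proj (perp p) by auto.
have Pq' : proj (perp q) by auto.
have Hppr : perp p * r = r * perp p by apply: comm_perp.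
have Hqqr : perp q * r = r * perp q by apply: comm_perp.
have Mp : pmeet p r = p * r by apply: meet_comm.
have Mpp : pmeet (perp p) r = perp p * r by apply: meet_comm.
have Mq : pmeet q r = q * r by apply: meet_comm.
have Mqq : pmeet (perp q) r = perp q * r by apply: meet_comm.
have Lp : rp A pos p q = pmeet p r.
  rewrite /rp /r /pcomm; apply: sle_anti; lat.
have Lpp : rpp A pos p q = pmeet (perp p) r.
  rewrite /rpp /r /pcomm; apply: sle_anti; lat.
have Lq : rq A pos p q = pmeet q r.
  rewrite /rq /r /pcomm; apply: sle_anti; lat.
have Lqq : rqq A pos p q = pmeet (perp q) r.
  rewrite /rqq /r /pcomm; apply: sle_anti; lat.
rewrite Lp Lpp Lq Lqq Mp Mpp Mq Mqq.
have [f1 f2 f3 f4 [f5 f6 f7 f8 f9]] := comm_facts Hp Pr Hpr.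
have [g1 g2 g3 g4 [g5 g6 g7 g8 g9]] := comm_facts Pp' Pr Hppr.
have [h1 h2 h3 h4 [h5 h6 h7 h8 h9]] := comm_facts Hq Pr Hqr.
have [k1 k2 k3 k4 [k5 k6 k7 k8 k9]] := comm_facts Pq' Pr Hqqr.
rewrite perpK in g3 g4 g5 g6 k3 k4 k5 k6.
split; first exact: Hi.
by repeat split.
Qed.

End Main.
End Dev.

Theorem theorem3p8 (R : realType) (E : algType R) (A pos : E -> Prop)
  (HA : synaptic A pos) (p q : E) (Hp : proj A p) (Hq : proj A q) :
  let r := pcomm A pos p q in
  let r_p := rp A pos p q in
  let r_pp := rpp A pos p q in
  let r_q := rq A pos p q in
  let r_qq := rqq A pos p q in
  let pmeet := pmeet A pos in
  (* (i) *)
  (p * q = q * p <-> r = 0) /\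
  (* (ii) *)
  (p * r_p = r_p /\ r_p * p = r_p /\ p * r_pp = 0 /\ r_pp * p = 0 /\
   p * r = r * p /\ r * p = pmeet p r /\ pmeet p r = r_p) /\
  (* (iii) *)
  (perp p * r_p = 0 /\ r_p * perp p = 0 /\
   perp p * r_pp = r_pp /\ r_pp * perp p = r_pp /\
   perp p * r = r * perp p /\ r * perp p = pmeet (perp p) r /\
   pmeet (perp p) r = r_pp) /\
  (* (iv) *)
  (q * r_q = r_q /\ r_q * q = r_q /\ q * r_qq = 0 /\ r_qq * q = 0 /\
   q * r = r * q /\ r * q = pmeet q r /\ pmeet q r = r_q) /\
  (* (v) *)
  (perp q * r_q = 0 /\ r_q * perp q = 0 /\
   perp q * r_qq = r_qq /\ r_qq * perp q = r_qq /\
   perp q * r = r * perp q /\ r * perp q = pmeet (perp q) r /\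
   pmeet (perp q) r = r_qq) /\
  (* (vi) *)
  (scomm p r /\ scomm (perp p) r /\ scomm q r /\ scomm (perp q) r) /\
  (* (vii) *)
  (scomm r_p r /\ scomm r_pp r /\ scomm (perp r_p) r /\
   scomm r_q r /\ scomm r_qq r /\ scomm (perp r_q) r) /\
  (* (viii) *)
  (r_p = pmeet p r /\ pmeet p r = p * r /\ p * r = r * p /\
   r_pp = pmeet (perp p) r /\ pmeet (perp p) r = perp p * r /\
   perp p * r = r * perp p /\
   r_q = pmeet q r /\ pmeet q r = q * r /\ q * r = r * q /\
   r_qq = pmeet (perp q) r /\ pmeet (perp q) r = perp q * r /\
   perp q * r = r * perp q).
Proof. exact: (main_lemma HA Hp Hq). Qed.
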